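(* Fix $p\in(\tfrac12,1)$ and let $\{B_n\}_{n\ge1}$ be a sequence with $B_n\in\{1,\dots,n\}$ and $\lim_{n\to\infty}B_n/n=q$ for some $q\in[0,1]$. Let $\sigma^n$ be the unique symmetric non-trivial Bayes-Nash equilibrium of $\Gamma(B_n,n)$, and let $x_n=\Pr_{\sigma^n}(\sum_{i=1}^n a_i\ge B_n\mid\omega=H,a_1=1)$ and $y_n=\Pr_{\sigma^n}(\sum_{i=1}^n a_i\ge B_n\mid\omega=L,a_1=1)$. Then $$\lim_{n\to\infty}\Big(x_n-\Pr_{\sigma^n}\big(\textstyle\sum_{i=1}^n a_i\ge B_n\mid\omega=H\big)\Big)=0\quad\text{and}\quad\lim_{n\to\infty}\Big(y_n-\Pr_{\sigma^n}\big(\textstyle\sum_{i=1}^n a_i\ge B_n\mid\omega=L\big)\Big)=0.$$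
   Context: The crowdfunding game $\Gamma(B,n)$ with parameter $p\in(\tfrac12,1)$: there are $n$ players and a threshold $B\in\{1,\dots,n\}$. A state $\omega\in\{H,L\}$ is drawn with probability $\tfrac12$ each. Conditional on $\omega$, each player $i$ independently receives a signal $s_i\in\{H,L\}$ with $\Pr(s_i=\omega\mid\omega)=p$. Players simultaneously choose $a_i\in\{0,1\}$. Player $i$'s payoff is $1$ if $a_i=1$, $\sum_j a_j\ge B$ and $\omega=H$; $-1$ if $a_i=1$, $\sum_j a_j\ge B$ and $\omega=L$; and $0$ otherwise. A strategy is a map $\sigma_i:\{H,L\}\to[0,1]$ giving the probability of action $1$ after each signal; Bayes-Nash equilibrium is defined as usual. A profile is non-trivial if $\Pr_\sigma(\sum_i a_i\ge B)>0$, and symmetric if all players use the same strategy. It is known that each $\Gamma(B,n)$ has a unique symmetric non-trivial Bayes-Nash equilibrium, in which each player plays $1$ with probability $1$ after signal $H$ and with some probability $\lambda\in[0,1)$ after signal $L$. *)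

(* Defs.v *)
From HB Require Import structures.
From mathcomp Require Import all_boot all_order all_algebra.
From mathcomp Require Import all_classical all_reals all_analysis.
Set Implicit Arguments. Unset Strict Implicit. Unset Printing Implicit Defensive.
Import Order.TTheory GRing.Theory Num.Theory.
Local Open Scope ring_scope.

(* Encoding: the state omega and the signals are booleans, true = H, false = L.
   An action a_i is a boolean, true = 1, false = 0.
   A (behavioural) strategy of player i is a map  bool -> R  giving the
   probability of playing 1 after each signal; a profile for n players is
   'I_n -> bool -> R. *)

Section Crowdfunding.
Variable R : realType.

Definition profile (n : nat) := 'I_n -> bool -> R.

Definition valid_profile n (sigma : profile n) : Prop :=
  forall i s, 0 <= sigma i s <= 1.

Definition nplay n (a : {ffun 'I_n -> bool}) : nat := (\sum_(i < n) (a i : nat))%N.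

Definition weight (p : R) n (sigma : profile n) (w : bool)
    (s a : {ffun 'I_n -> bool}) : R :=
  (1 / 2) * (\prod_(i < n) (if s i == w then p else 1 - p))
          * (\prod_(i < n) (if a i then sigma i (s i) else 1 - sigma i (s i))).

Definition prob (p : R) n (sigma : profile n)
    (E : bool -> {ffun 'I_n -> bool} -> {ffun 'I_n -> bool} -> bool) : R :=
  \sum_(w : bool) \sum_(s : {ffun 'I_n -> bool}) \sum_(a : {ffun 'I_n -> bool})
     (if E w s a then weight p sigma w s a else 0).

Definition cprob (p : R) n (sigma : profile n) E C : R :=
  prob p sigma (fun w s a => E w s a && C w s a) / prob p sigma C.

Definition success n (B : nat) (w : bool) (s a : {ffun 'I_n -> bool}) : bool :=
  (B <= nplay a)%N.

Definition ex_post_payoff n (B : nat) (i : 'I_n) (w : bool)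
    (s a : {ffun 'I_n -> bool}) : R :=
  if a i && (B <= nplay a)%N then (if w then 1 else -1) else 0.

Definition payoff (p : R) n (B : nat) (sigma : profile n) (i : 'I_n) : R :=
  \sum_(w : bool) \sum_(s : {ffun 'I_n -> bool}) \sum_(a : {ffun 'I_n -> bool})
     weight p sigma w s a * ex_post_payoff B i w s a.

Definition deviate n (sigma : profile n) (i : 'I_n) (tau : bool -> R) : profile n :=
  fun j => if j == i then tau else sigma j.

Definition is_BNE (p : R) n (B : nat) (sigma : profile n) : Prop :=
  valid_profile sigma /\
  forall (i : 'I_n) (tau : bool -> R), (forall s, 0 <= tau s <= 1) ->
    payoff p B (deviate sigma i tau) i <= payoff p B sigma i.

Definition symmetric n (sigma : profile n) : Prop :=
  forall (i j : 'I_n) (s : bool), sigma i s = sigma j s.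

Definition nontrivial (p : R) n (B : nat) (sigma : profile n) : Prop :=
  0 < prob p sigma (@success n B).

Definition sym_nontriv_BNE (p : R) n (B : nat) (sigma : profile n) : Prop :=
  is_BNE p B sigma /\ symmetric sigma /\ nontrivial p B sigma.

Definition stateH n (w : bool) (s a : {ffun 'I_n -> bool}) : bool := w.
Definition stateL n (w : bool) (s a : {ffun 'I_n -> bool}) : bool := ~~ w.
(* omega = H and a_1 = 1 (player 1 is the player with index 0) *)
Definition stateH_a1 n (w : bool) (s a : {ffun 'I_n -> bool}) : bool :=
  w && [exists i : 'I_n, (val i == 0)%N && a i].
Definition stateL_a1 n (w : bool) (s a : {ffun 'I_n -> bool}) : bool :=
  ~~ w && [exists i : 'I_n, (val i == 0)%N && a i].

End Crowdfunding.

(* Main.v *)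
Require Import Defs.
From HB Require Import structures.
From mathcomp Require Import all_boot all_order all_algebra.
From mathcomp Require Import all_classical all_reals all_analysis.
From mathcomp Require Import ring lra.
Import Order.TTheory GRing.Theory Num.Theory.
Import numFieldNormedType.Exports.
Local Open Scope classical_set_scope.
Local Open Scope ring_scope.

Set Implicit Arguments. Unset Strict Implicit. Unset Printing Implicit Defensive.

Section Poly.
Variable R : realType.

Definition tl (k : nat) (P : {poly R}) : R := P.[1] - \sum_(j < k) P`_j.

Lemma tlD k P1 P2 : tl k (P1 + P2) = tl k P1 + tl k P2.
Proof.
rewrite /tl hornerD.
under eq_bigr do rewrite coefD.
rewrite big_split /=; lra.
Qed.

Lemma tlC k c P : tl k (c%:P * P) = c * tl k P.
Proof.
rewrite /tl hornerCM mulrBr mulr_sumr.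
by under eq_bigr do rewrite coefCM.
Qed.

Lemma tlX k P : tl k.+1 ('X * P) = tl k P.
Proof.
rewrite /tl mulrC hornerMX mulr1 big_ord_recl /= coefMX /=.
by under eq_bigr do rewrite coefMX /=; rewrite add0r.
Qed.

Lemma tl0 P : tl 0 P = P.[1].
Proof. by rewrite /tl big_ord0 subr0. Qed.

Lemma tlS k P : tl k P - tl k.+1 P = P`_k.
Proof. rewrite /tl big_ord_recr /=; lra. Qed.

Definition lin1 (r : R) : {poly R} := (1 - r)%:P + r%:P * 'X.
Definition Q (m : nat) (r : R) : {poly R} := lin1 r ^+ m.

Lemma Q1 m r : (Q m r).[1] = 1.
Proof.
rewrite /Q horner_exp /lin1 hornerD hornerC hornerCM hornerX mulr1.
by rewrite subrK expr1n.
Qed.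

Lemma tlQS m r k : tl k.+1 (Q m.+1 r) = (1 - r) * tl k.+1 (Q m r) + r * tl k (Q m r).
Proof.
by rewrite /Q exprS {1}/lin1 mulrDl tlD tlC -mulrA tlC tlX.
Qed.

Lemma tlQ0 m r : tl 0 (Q m r) = 1.
Proof. by rewrite tl0 Q1. Qed.

End Poly.

Section Sums.
Variable R : realType.

Definition lin (c : bool -> R) : {poly R} := (c false)%:P + (c true)%:P * 'X.

Lemma prod_lin n (c : 'I_n -> bool -> R) :
  \prod_(i < n) lin (c i) =
  \sum_(a : {ffun 'I_n -> bool}) (\prod_i c i (a i))%:P * 'X^(nplay a).
Proof.
have -> : \prod_(i < n) lin (c i) = \prod_(i < n) \sum_(b : bool) (c i b)%:P * 'X^b.
  by apply: eq_bigr => i _; rewrite big_bool /lin /= expr0 mulr1 expr1 addrC.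
rewrite bigA_distr_bigA /=; apply: eq_bigr => a _.
rewrite big_split /= rmorph_prod /nplay.
congr (_ * _).
by rewrite (big_morph (fun k => 'X^k) (exprD _) (expr0 _)).
Qed.

Lemma horner_prod_lin n (c : 'I_n -> bool -> R) :
  (\prod_(i < n) lin (c i)).[1] = \sum_(a : {ffun 'I_n -> bool}) \prod_i c i (a i).
Proof.
rewrite prod_lin horner_sum; apply: eq_bigr => a _.
by rewrite hornerCM hornerXn expr1n mulr1.
Qed.

Lemma coef_prod_lin n (c : 'I_n -> bool -> R) j :
  (\prod_(i < n) lin (c i))`_j =
  \sum_(a : {ffun 'I_n -> bool}) (if nplay a == j then \prod_i c i (a i) else 0).
Proof.
rewrite prod_lin coef_sum; apply: eq_bigr => a _.
rewrite coefCM coefXn eq_sym; by case: (_ == _); rewrite ?mulr1 ?mulr0.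
Qed.

Lemma sum_ind_lt (x : R) (v k : nat) :
  \sum_(j < k) (if v == j then x else 0) = if (v < k)%N then x else 0.
Proof.
elim: k => [|k IH]; first by rewrite big_ord0 ltn0.
rewrite big_ord_recr /= IH [in RHS]ltnS [in RHS]leq_eqVlt.
case: eqP => [->|_]; first by rewrite ltnn add0r.
by rewrite addr0 /=.
Qed.

Lemma sum_tl n (c : 'I_n -> bool -> R) k :
  \sum_(a : {ffun 'I_n -> bool}) (if (k <= nplay a)%N then \prod_i c i (a i) else 0)
  = tl k (\prod_(i < n) lin (c i)).
Proof.
rewrite /tl horner_prod_lin.
under [X in _ = _ - X]eq_bigr do rewrite coef_prod_lin.
rewrite exchange_big /=.
under [X in _ = _ - X]eq_bigr do rewrite sum_ind_lt.
rewrite -sumrB; apply: eq_bigr => a _.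
by rewrite leqNgt; case: ltnP => _ /=; rewrite ?subrr ?subr0.
Qed.

End Sums.

Section Game.
Variable R : realType.

Definition cs (p : R) (w : bool) (st : bool -> R) (b : bool) : R :=
  \sum_(s0 : bool) (if s0 == w then p else 1 - p) * (if b then st s0 else 1 - st s0).

Lemma sum_s n p (sigma : profile R n) w a :
  \sum_(s : {ffun 'I_n -> bool}) weight p sigma w s a = 1/2 * \prod_i cs p w (sigma i) (a i).
Proof.
rewrite /weight.
rewrite (eq_bigr (fun s : {ffun 'I_n -> bool} => 1/2 * ((\prod_(i < n) (if s i == w then p else 1 - p)) *
     \prod_(i < n) (if a i then sigma i (s i) else 1 - sigma i (s i))))); last by move=> s _; rewrite mulrA.
rewrite -mulr_sumr; congr (_ * _).
have -> : \prod_i cs p w (sigma i) (a i) =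
   \sum_(s : {ffun 'I_n -> bool}) \prod_i ((if s i == w then p else 1 - p) *
        (if a i then sigma i (s i) else 1 - sigma i (s i))).
  by rewrite /cs bigA_distr_bigA.
by apply: eq_bigr => s _; rewrite big_split.
Qed.

Lemma probE n p (sigma : profile R n) (E : bool -> {ffun 'I_n -> bool} -> bool) :
  prob p sigma (fun w s a => E w a) =
  \sum_(w : bool) 1/2 * \sum_(a : {ffun 'I_n -> bool})
      (if E w a then \prod_i cs p w (sigma i) (a i) else 0).
Proof.
rewrite /prob; apply: eq_bigr => w _; rewrite exchange_big mulr_sumr.
apply: eq_bigr => a _; case: (E w a); last by rewrite big1 ?mulr0.
by rewrite sum_s.
Qed.

Lemma payoffE n p B (sigma : profile R n) i :
  payoff p B sigma i =
  \sum_(w : bool) (if w then 1 else -1) * (1/2) * \sum_(a : {ffun 'I_n -> bool})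
      (if a i && (B <= nplay a)%N then \prod_j cs p w (sigma j) (a j) else 0).
Proof.
rewrite /payoff; apply: eq_bigr => w _; rewrite exchange_big mulr_sumr.
apply: eq_bigr => a _; rewrite /ex_post_payoff.
case: (_ && _); last by rewrite mulr0 big1 // => s _; rewrite mulr0.
by rewrite -big_distrl /= sum_s mulrC mulrA.
Qed.

Lemma cs_false p w st : cs p w st false = 1 - cs p w st true.
Proof. rewrite /cs !big_bool /=; case: w => /=; lra. Qed.

Lemma lin_cs p w st : lin (cs p w st) = lin1 (cs p w st true).
Proof. by rewrite /lin /lin1 cs_false. Qed.

Lemma sum_a0 m (c : 'I_m.+1 -> bool -> R) k :
  \sum_(a : {ffun 'I_m.+1 -> bool}) (if a ord0 && (k <= nplay a)%N then \prod_i c i (a i) else 0)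
  = c ord0 true * tl k.-1 (\prod_(i < m) lin (c (lift ord0 i))).
Proof.
pose c' i b := if (i == ord0) && ~~ b then 0 else c i b.
have -> : \sum_(a : {ffun 'I_m.+1 -> bool}) (if a ord0 && (k <= nplay a)%N then \prod_i c i (a i) else 0)
   = \sum_(a : {ffun 'I_m.+1 -> bool}) (if (k <= nplay a)%N then \prod_i c' i (a i) else 0).
  apply: eq_bigr => a _.
  case ha: (a ord0) => /=.
    case: (_ <= _)%N => //; apply: eq_bigr => i _.
    by rewrite /c'; case: eqP => [->|]; rewrite ?ha.
  case: (_ <= _)%N => //.
  by rewrite (bigD1 ord0) //= /c' eqxx ha mul0r.
rewrite sum_tl big_ord_recl.
have -> : lin (c' ord0) = (c ord0 true)%:P * 'X by rewrite /lin /c' /= add0r.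
have -> : \prod_(i < m) lin (c' (lift ord0 i)) = \prod_(i < m) lin (c (lift ord0 i)).
  by apply: eq_bigr => i _; rewrite /lin /c' /=.
rewrite -mulrA tlC; case: k => [|k] /=; last by rewrite tlX.
by rewrite !tl0 [X in X.[_]]mulrC hornerMX mulr1.
Qed.

Lemma prod_lin_const n (c : 'I_n -> bool -> R) r :
  (forall i b, c i b = if b then r else 1 - r) ->
  \prod_(i < n) lin (c i) = Q n r.
Proof.
move=> hc; rewrite /Q -[n in RHS]card_ord -prodr_const.
by apply: eq_bigr => i _; rewrite /lin /lin1 !hc.
Qed.

End Game.

Section QProps.
Variable R : realType.

Definition D (m : nat) (r : R) (j : nat) : R := ('C(m, j))%:R * r ^+ j * (1 - r) ^+ (m - j).

Lemma coefQ m r j : (Q m r)`_j = D m r j.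
Proof.
elim: m j => [|m IH] j.
  rewrite /Q expr0 coef1 /D; case: j => [|j] /=.
    by rewrite bin0 subn0 !expr0 !mulr1.
  by rewrite bin_small // !mul0r.
rewrite /Q exprS /lin1 mulrDl coefD coefCM -mulrA coefCM coefXM -/(Q m r) !IH /D.
case: j => [|j] /=.
  by rewrite !bin0 !subn0 !expr0 !mul1r mulr0 addr0 exprS.
rewrite binS natrD subSS.
case: (ltnP j m) => hj.
  have -> : (m - j = (m - j.+1).+1)%N by rewrite subnS prednK // subn_gt0.
  rewrite !exprS; ring.
rewrite (bin_small (n:=m)) ?ltnS // exprS; ring.
Qed.

Lemma Q0 (r : R) : Q 0 r = 1.
Proof. by rewrite /Q expr0. Qed.

Lemma tl1S k : tl k.+1 (1 : {poly R}) = 0.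
Proof.
rewrite /tl hornerC big_ord_recl coef1 /= big1 ?addr0 ?subrr // => i _.
by rewrite coef1.
Qed.

Lemma tl_ge0 m (r : R) k : 0 <= r <= 1 -> 0 <= tl k (Q m r).
Proof.
move=> /andP[r0 r1]; elim: m k => [|m IH] [|k]; rewrite ?tlQ0 //.
  by rewrite Q0 tl1S.
rewrite tlQS; apply: addr_ge0; apply: mulr_ge0 => //; rewrite ?subr_ge0 //.
Qed.

Lemma tl_decr m (r : R) k : 0 <= r <= 1 -> tl k.+1 (Q m r) <= tl k (Q m r).
Proof.
move=> hr; rewrite -subr_ge0 tlS coefQ /D.
case/andP: hr => r0 r1.
by rewrite !mulr_ge0 ?exprn_ge0 ?subr_ge0 ?ler0n.
Qed.

Lemma tl_le1 m (r : R) k : 0 <= r <= 1 -> tl k (Q m r) <= 1.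
Proof.
move=> hr; elim: k => [|k IH]; first by rewrite tlQ0.
exact: le_trans (tl_decr _ _ hr) IH.
Qed.

Lemma tl_mono m (r s : R) k : 0 <= r -> r <= s -> s <= 1 -> tl k (Q m r) <= tl k (Q m s).
Proof.
move=> r0 rs s1.
have hr : 0 <= r <= 1 by apply/andP; split => //; apply: le_trans rs s1.
have hs : 0 <= s <= 1 by apply/andP; split => //; apply: le_trans r0 rs.
elim: m k => [|m IH] [|k]; rewrite ?tlQ0 // ?Q0 //.
rewrite !tlQS.
have h1 := IH k.+1; have h2 := IH k.
have h3 := tl_decr m k hs.
set A := tl k.+1 (Q m r) in h1 *; set B := tl k (Q m r) in h2 *.
set A' := tl k.+1 (Q m s) in h1 h3 *; set B' := tl k (Q m s) in h2 h3 *.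
have : (1 - r) * A <= (1 - r) * A' by apply: ler_wpM2l; rewrite ?subr_ge0 //; case/andP: hr.
have : r * B <= r * B' by apply: ler_wpM2l.
have : 0 <= (s - r) * (B' - A') by apply: mulr_ge0; rewrite subr_ge0.
nra.
Qed.

Lemma tl_pos m (r : R) k : 0 < r <= 1 -> (k <= m)%N -> 0 < tl k (Q m r).
Proof.
move=> /andP[r0 r1]; have hr : 0 <= r <= 1 by rewrite r1 ltW.
elim: m k => [|m IH] [|k] hk; rewrite ?tlQ0 ?ltr01 //.
rewrite tlQS; apply: lt_le_trans (_ : r * tl k (Q m r) <= _).
  by apply: mulr_gt0 => //; apply: IH.
rewrite lerDr; apply: mulr_ge0; last by apply: tl_ge0.
by rewrite subr_ge0.
Qed.

Lemma tl_zero m k : tl k.+1 (Q m (0 : R)) = 0.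
Proof.
have -> : Q m (0 : R) = 1 by rewrite /Q /lin1 subr0 mul0r addr0 expr1n.
exact: tl1S.
Qed.

Lemma coefQ_le1 m (r : R) k : 0 <= r <= 1 -> (Q m r)`_k <= 1.
Proof.
move=> hr; rewrite -tlS; have := tl_ge0 m k.+1 hr; have := tl_le1 m k hr; lra.
Qed.

End QProps.

Section Pmf.
Variable R : realType.

Lemma exists_nat (x : R) : exists n : nat, x < n%:R.
Proof.
case: (leP 0 x) => hx; first by exists (Num.bound x); exact: archi_boundP.
by exists 0%N.
Qed.

Lemma argmax (f : nat -> R) m : exists2 k, (k <= m)%N & forall j, (j <= m)%N -> f j <= f k.
Proof.
elim: m => [|m [k hk IH]]; first by exists 0%N => // j; rewrite leqn0 => /eqP ->.
case: (leP (f m.+1) (f k)) => h.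
  exists k; first exact: leqW.
  by move=> j; rewrite leq_eqVlt ltnS => /orP[/eqP ->|]; [exact: h| exact: IH].
exists m.+1 => // j; rewrite leq_eqVlt ltnS => /orP[/eqP ->//|/IH hj].
exact: le_trans hj (ltW h).
Qed.

Lemma bernoulli (th : R) j : 0 <= th -> th <= 1 -> 1 - j%:R * (1 - th) <= th ^+ j.
Proof.
move=> h0 h1; elim: j => [|j IH]; first by rewrite mul0r subr0 expr0.
rewrite exprS.
have : th * (1 - j%:R * (1 - th)) <= th * th ^+ j by apply: ler_wpM2l.
have : 0 <= j%:R * (1 - th) * (1 - th) by rewrite !mulr_ge0 ?ler0n ?subr_ge0.
rewrite -natr1; nra.
Qed.

Lemma D_ratio m (r : R) j :
  D m r j.+1 * (j.+1)%:R * (1 - r) = D m r j * (m - j)%:R * r.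
Proof.
rewrite /D.
case: (ltnP j m) => hj.
  have e : (m - j = (m - j.+1).+1)%N by rewrite subnS prednK // subn_gt0.
  rewrite e exprS.
  have : ((j.+1) * 'C(m, j.+1) = (m - j) * 'C(m, j))%N by rewrite mul_bin_left.
  rewrite e => /(congr1 (fun x => x%:R : R)); rewrite !natrM => h.
  rewrite [(1 - r) ^+ (m - j.+1).+1]exprS.
  set A := 'C(m, j.+1)%:R; set Bc := 'C(m, j)%:R; set J := (j.+1)%:R.
  set N := ((m - j.+1).+1)%:R; set P := r ^+ j; set E := (1 - r) ^+ (m - j.+1).
  set c := 1 - r.
  transitivity ((J * A) * (r * P * E * c)); first ring.
  rewrite h; ring.
rewrite bin_small ?ltnS //.
have -> : (m - j)%N = 0%N by apply/eqP; rewrite subn_eq0.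
by rewrite !mul0r mulr0 mul0r.
Qed.

Lemma D_ge0 m (r : R) j : 0 <= r <= 1 -> 0 <= D m r j.
Proof. by case/andP=> r0 r1; rewrite /D !mulr_ge0 ?exprn_ge0 ?subr_ge0 ?ler0n. Qed.

Lemma D_gt0 m (r : R) j : 0 < r < 1 -> (j <= m)%N -> 0 < D m r j.
Proof.
case/andP=> r0 r1 hj; rewrite /D !mulr_gt0 ?exprn_gt0 ?subr_gt0 //.
by rewrite ltr0n bin_gt0.
Qed.

Lemma D_le1 m (r : R) j : 0 <= r <= 1 -> D m r j <= 1.
Proof. by move=> hr; rewrite -coefQ coefQ_le1. Qed.

Lemma sum_window m (r : R) ks t : 0 <= r <= 1 ->
  \sum_(j < t) D m r (ks + j) <= 1.
Proof.
move=> hr.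
have -> : \sum_(j < t) D m r (ks + j) = tl ks (Q m r) - tl (ks + t) (Q m r).
  elim: t => [|t IH]; first by rewrite big_ord0 addn0 subrr.
  rewrite big_ord_recr /= IH -coefQ -tlS addnS; lra.
have := tl_ge0 m (ks + t) hr; have := tl_le1 m ks hr; lra.
Qed.

Lemma pmf_small (dl eps : R) : 0 < dl -> dl < 1 -> 0 < eps ->
  exists M0 : nat, forall m, (M0 <= m)%N -> forall r, dl <= r -> r <= 1 ->
    forall k, (1 - r) * D m r k <= eps.
Proof.
move=> dl0 dl1 eps0.
have [t0 ht0] := exists_nat (2 / eps).
set t := t0.+1.
have t1 : 1 <= t%:R :> R by rewrite ler1n.
have ht : 2 <= eps * (t%:R + 1).
  have e1 : 2 / eps * eps = 2 by rewrite mulfVK // gt_eqF.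
  have : t0%:R <= t%:R :> R by rewrite ler_nat.
  move=> h0.
  have : 2 / eps * eps <= (t%:R + 1) * eps by apply: ler_wpM2r; lra.
  rewrite e1; lra.
set K := 2 * t%:R * (t%:R + 1) / dl.
have hK : K * dl = 2 * t%:R * (t%:R + 1) by rewrite /K mulfVK // gt_eqF.
have K1 : t%:R + 1 <= K.
  have Kp : 0 < K by rewrite /K !mulr_gt0 ?invr_gt0 // ?ltr0Sn //; lra.
  have : K * dl <= K * 1 by apply: ler_wpM2l; lra.
  have : 0 <= (t%:R - 1) * (2 * t%:R + 3) :> R by apply: mulr_ge0; lra.
  lra.
have [M0 hM0] := exists_nat (K / eps).
exists M0 => m hm r dlr r1 k.
have hKe : K <= eps * (m%:R + 1).
  have e1 : K / eps * eps = K by rewrite mulfVK // gt_eqF.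
  have : M0%:R <= m%:R :> R by rewrite ler_nat.
  move=> h0.
  have : K / eps * eps <= (m%:R + 1) * eps by apply: ler_wpM2r; lra.
  rewrite e1; lra.
have r0 : 0 < r by lra.
have hr : 0 <= r <= 1 by rewrite r1 ltW.
case: (eqVneq r 1) => [->|rne1]; first by rewrite subrr mul0r ltW.
have rl1 : r < 1 by rewrite lt_neqAle rne1.
have hr' : 0 < r < 1 by rewrite r0 rl1.
have Dk0 := D_ge0 m k hr.
have Dk1 := D_le1 m k hr.
case: (ltP ((1 - r) * (m%:R + 1)) K) => hcase.
  have hm1 : 0 < m%:R + 1 :> R by rewrite natr1 ltr0Sn.
  have hc : 1 - r < eps.
    have : (1 - r) * (m%:R + 1) < eps * (m%:R + 1) by lra.
    by rewrite ltr_pM2r.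
  have : (1 - r) * D m r k <= (1 - r) * 1 by apply: ler_wpM2l; lra.
  lra.
have [ks hks hmax] := argmax (D m r) m.
set M := D m r ks.
have Mpos : 0 < M := D_gt0 hr' hks.
have hall : forall j, D m r j <= M.
  move=> j; case: (leqP j m) => hj; first exact: hmax.
  by rewrite /D bin_small // !mul0r ltW.
have H1 : ks%:R <= r * (m%:R + 1).
  case: (posnP ks) => [->|kpos]; first by apply: mulr_ge0; [lra | rewrite natr1 ler0n].
  have e := D_ratio m r ks.-1; rewrite prednK // -/M in e.
  have hi := hall ks.-1.
  have hmi : ((m - ks.-1)%:R : R) = m%:R - ks%:R + 1.
    rewrite natrB; last by apply: leq_trans hks; apply: leq_pred.
    by rewrite -(prednK kpos) -natr1; ring.
  rewrite hmi in e.
  have : M * ks%:R * (1 - r) <= M * (m%:R - ks%:R + 1) * r.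
    rewrite e; apply: ler_wpM2r; first lra.
    apply: ler_wpM2r => //; rewrite -hmi ler0n //.
  move=> h.
  have : M * (ks%:R * (1 - r) - (m%:R - ks%:R + 1) * r) <= 0 by lra.
  rewrite pmulr_rle0 //; lra.
have H2 : r * (m%:R + 1) <= ks%:R + 1.
  have := D_ratio m r ks; rewrite -/M => e.
  have hi := hall ks.+1.
  have hmi : ((m - ks)%:R : R) = m%:R - ks%:R by rewrite natrB.
  rewrite hmi in e.
  have : M * (m%:R - ks%:R) * r <= M * (ks.+1)%:R * (1 - r).
    rewrite -e; apply: ler_wpM2r; first lra.
    apply: ler_wpM2r => //; lra.
  rewrite -natr1 => h.
  have : M * ((m%:R - ks%:R) * r - (ks%:R + 1) * (1 - r)) <= 0 by lra.
  rewrite pmulr_rle0 //; lra.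
have hwin : (ks + t <= m)%N.
  rewrite -(ler_nat R) natrD; lra.
set num := ((m - ks - t)%:R : R) * r.
set den := ((ks + t).+1%:R : R) * (1 - r).
have hnum : num = (m%:R - ks%:R - t%:R) * r.
  by rewrite /num -subnDA natrB // natrD; ring.
have hden : den = (ks%:R + t%:R + 1) * (1 - r) by rewrite /den -natr1 natrD.
have den0 : 0 < den.
  rewrite hden; apply: mulr_gt0; last lra.
  by rewrite -natrD natr1 ltr0Sn.
set th := num / den.
have hth : th * den = num by rewrite /th mulfVK // gt_eqF.
have num0 : 0 <= num by rewrite /num mulr_ge0 ?ler0n // ltW.
have th0 : 0 <= th by rewrite /th divr_ge0 // ltW.
have dmn : den - num = ks%:R + t%:R + 1 - r * (m%:R + 1) by rewrite hden hnum; ring.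
have th1 : th <= 1.
  have : num <= den by lra.
  by rewrite -hth -{2}(mul1r den) ler_pM2r.
have hdenK : 2 * t%:R * (t%:R + 1) <= den.
  rewrite -hK hden.
  have m0 : 0 <= m%:R :> R by rewrite ler0n.
  have a1 : K * dl <= (1 - r) * (m%:R + 1) * dl by apply: ler_wpM2r; lra.
  have a2 : (1 - r) * (m%:R + 1) * dl <= (1 - r) * (m%:R + 1) * r.
    by apply: ler_wpM2l; [apply: mulr_ge0; lra | lra].
  have a3 : (1 - r) * (r * (m%:R + 1)) <= (1 - r) * (ks%:R + 1) by apply: ler_wpM2l; lra.
  have a4 : 0 <= t%:R * (1 - r) by apply: mulr_ge0; [rewrite ler0n | lra].
  lra.
have hth2 : t%:R * (1 - th) <= 1 / 2.
  have : 2 * t%:R * (den - num) <= 2 * t%:R * (t%:R + 1).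
    apply: ler_wpM2l; first by rewrite mulr_ge0 ?ler0n.
    lra.
  have e2 : den - num = (1 - th) * den by rewrite mulrBl mul1r hth.
  rewrite e2 => h.
  have : 2 * (t%:R * (1 - th)) * den <= 1 * den by lra.
  rewrite ler_pM2r // => h'; lra.
have lower : forall j, (j <= t)%N -> M * th ^+ j <= D m r (ks + j).
  elim => [|j IH] hj; first by rewrite expr0 mulr1 addn0.
  have hj' : (j <= t)%N by apply: ltnW.
  have IH' := IH hj'.
  have e := D_ratio m r (ks + j).
  have hmj : ((m - (ks + j))%:R : R) = m%:R - ks%:R - j%:R.
    rewrite natrB ?natrD; first ring.
    by apply: leq_trans hwin; rewrite leq_add2l.
  rewrite hmj -natr1 natrD in e.
  rewrite addnS.
  have jt : (j%:R : R) + 1 <= t%:R by rewrite natr1 ler_nat.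
  have Dpos := D_ge0 m (ks + j).+1 hr.
  (* D(ks+j+1) * den >= D(ks+j+1) * (ks+j+1)(1-r) = D(ks+j) (m-ks-j) r >= M th^j num *)
  have step1 : D m r (ks + j).+1 * ((ks%:R + j%:R + 1) * (1 - r)) <= D m r (ks + j).+1 * den.
    apply: ler_wpM2l => //; rewrite hden; apply: ler_wpM2r; lra.
  have step2 : M * th ^+ j * num <= D m r (ks + j) * ((m%:R - ks%:R - j%:R) * r).
    rewrite hnum; apply: ler_pM => //.
      by rewrite mulr_ge0 ?exprn_ge0 // ltW.
      rewrite -hnum //.
    apply: ler_wpM2r; lra.
  have : M * th ^+ j.+1 * den = M * th ^+ j * num by rewrite exprS -hth; ring.
  move=> e3.
  have : M * th ^+ j.+1 * den <= D m r (ks + j).+1 * den.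
    rewrite e3; apply: le_trans step2 _; rewrite mulrA -e -mulrA; exact: step1.
  by rewrite ler_pM2r.
have lowerh : forall j, (j <= t)%N -> M / 2 <= D m r (ks + j).
  move=> j hj; apply: le_trans (lower j hj).
  have := bernoulli j th0 th1.
  have : (j%:R : R) <= t%:R by rewrite ler_nat.
  move=> hjt hb.
  have : j%:R * (1 - th) <= t%:R * (1 - th) by apply: ler_wpM2r; lra.
  move=> hh.
  have : 1 / 2 <= th ^+ j by lra.
  move=> h; have := ler_wpM2l (ltW Mpos) h; lra.
have hsum : (t.+1)%:R * (M / 2) <= 1.
  apply: le_trans (sum_window m ks t.+1 hr).
  have e : \sum_(j < t.+1) (M / 2) = (t.+1)%:R * (M / 2) by rewrite sumr_const card_ord mulr_natl.
  rewrite -e; apply: ler_sum => j _.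
  apply: lowerh; by rewrite -ltnS.
have : M <= eps.
  have : (t%:R + 1) * (M / 2) <= 1 by rewrite -natr1 in hsum.
  move=> hh.
  have tp : 0 < t%:R + 1 :> R by lra.
  have : M * (t%:R + 1) <= eps * (t%:R + 1) by lra.
  by rewrite ler_pM2r.
move=> hMe.
have : (1 - r) * D m r k <= D m r k by rewrite ler_piMl //; lra.
have := hall k; lra.
Qed.

End Pmf.

Section Main.
Variable R : realType.

Lemma prob_ext n (p : R) (sigma : profile R n) E1 E2 :
  (forall w s a, E1 w s a = E2 w s a) -> prob p sigma E1 = prob p sigma E2.
Proof.
move=> h; rewrite /prob; apply: eq_bigr => w _; apply: eq_bigr => s _; apply: eq_bigr => a _.
by rewrite h.
Qed.

Lemma prob_w n (p : R) (sigma : profile R n) (w0 : bool) (E : {ffun 'I_n -> bool} -> bool) :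
  prob p sigma (fun w s a => (w == w0) && E a) =
  1/2 * \sum_(a : {ffun 'I_n -> bool}) (if E a then \prod_i cs p w0 (sigma i) (a i) else 0).
Proof.
rewrite (@probE R n p sigma (fun w a => (w == w0) && E a)) big_bool.
case: w0 => /=.
  by rewrite big1_eq mulr0 addr0.
by rewrite big1_eq mulr0 add0r.
Qed.

Lemma exists0 m (a : {ffun 'I_m.+1 -> bool}) :
  [exists i : 'I_m.+1, (val i == 0)%N && a i] = a ord0.
Proof.
apply/existsP/idP => [[i /andP[/eqP hi ai]]|h].
  by have -> : ord0 = i by apply: val_inj.
by exists ord0.
Qed.

Lemma cs_ext (p : R) w (st1 st2 : bool -> R) b :
  (forall s, st1 s = st2 s) -> cs p w st1 b = cs p w st2 b.
Proof. by move=> h; rewrite /cs; apply: eq_bigr => s _; rewrite !h. Qed.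

Lemma sumA m (c : 'I_m.+1 -> bool -> R) r k :
  (forall i b, c i b = if b then r else 1 - r) ->
  \sum_(a : {ffun 'I_m.+1 -> bool}) (if (k <= nplay a)%N then \prod_i c i (a i) else 0)
  = tl k (Q m.+1 r).
Proof. by move=> h; rewrite sum_tl (prod_lin_const h). Qed.

Lemma sumA0 m (c : 'I_m.+1 -> bool -> R) r k :
  (forall i b, c i b = if b then r else 1 - r) ->
  \sum_(a : {ffun 'I_m.+1 -> bool}) (if a ord0 && (k <= nplay a)%N then \prod_i c i (a i) else 0)
  = r * tl k.-1 (Q m r).
Proof.
move=> h; rewrite sum_a0 h; congr (_ * _); congr (tl _ _).
by apply: prod_lin_const => i b; rewrite h.
Qed.

Definition rr (p : R) (w : bool) (st : bool -> R) := cs p w st true.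

Lemma cs_sym m (p : R) (sigma : profile R m.+1) w :
  Defs.symmetric sigma -> forall i b, cs p w (sigma i) b = if b then rr p w (sigma ord0) else 1 - rr p w (sigma ord0).
Proof.
move=> hs i b; rewrite (@cs_ext p w (sigma i) (sigma ord0)); last by move=> s; apply: hs.
by case: b; rewrite // cs_false.
Qed.

Lemma delta_w m (p : R) (sigma : profile R m.+1) (B : nat) (w0 : bool)
  (C1 C2 : bool -> {ffun 'I_m.+1 -> bool} -> {ffun 'I_m.+1 -> bool} -> bool) :
  (forall w s a, C1 w s a = (w == w0) && [exists i : 'I_m.+1, (val i == 0)%N && a i]) ->
  (forall w s a, C2 w s a = (w == w0)) ->
  Defs.symmetric sigma -> (1 <= B)%N -> rr p w0 (sigma ord0) != 0 ->
  cprob p sigma (@success m.+1 B) C1 - cprob p sigma (@success m.+1 B) C2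
  = (1 - rr p w0 (sigma ord0)) * D m (rr p w0 (sigma ord0)) B.-1.
Proof.
move=> h1 h2 hs hB hr0.
set r := rr p w0 (sigma ord0).
have hc := cs_sym p w0 hs.
rewrite /cprob.
rewrite (@prob_ext _ p sigma _ (fun w s a => (w == w0) && (a ord0 && (B <= nplay a)%N))); last first.
  move=> w s a; rewrite /success h1 exists0; by case: (w == w0); case: (a ord0); case: (_ <= _)%N.
rewrite (@prob_ext _ p sigma C1
  (fun w s a => (w == w0) && (a ord0 && (0 <= nplay a)%N))); last first.
  by move=> w s a; rewrite h1 exists0 andbT.
rewrite (@prob_ext _ p sigma (fun w s a => success B w s a && C2 w s a)
  (fun w s a => (w == w0) && (B <= nplay a)%N)); last first.
  by move=> w s a; rewrite h2 andbC.
rewrite (@prob_ext _ p sigma C2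
  (fun w s a => (w == w0) && (0 <= nplay a)%N)); last first.
  by move=> w s a; rewrite h2 andbT.
rewrite !prob_w (sumA0 _ hc) (sumA0 _ hc) (sumA B hc) (sumA 0 hc) -/r.
rewrite !tlQ0 /=.
case: B hB => [//|B] _ /=.
rewrite tlQS -coefQ -tlS.
by field.
Qed.

End Main.

Section Eq.
Variable R : realType.

Lemma rrE (p : R) w st : rr p w st =
  (if w then p else 1 - p) * st true + (if w then 1 - p else p) * st false.
Proof. by rewrite /rr /cs big_bool; case: w. Qed.

Lemma payoff_sym m (p : R) B (pi : profile R m.+1) (s0 : bool -> R) :
  (forall j s, pi (lift ord0 j) s = s0 s) ->
  payoff p B pi ord0 = \sum_(w : bool) (if w then 1 else -1) * (1/2) *
     (rr p w (pi ord0) * tl B.-1 (Q m (rr p w s0))).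
Proof.
move=> h; rewrite payoffE; apply: eq_bigr => w _; congr (_ * _).
rewrite (@sum_a0 R m (fun j b => cs p w (pi j) b)); congr (_ * tl _ _); apply: prod_lin_const => i b.
rewrite (@cs_ext R p w _ s0) //.
by case: b; rewrite // cs_false.
Qed.

Lemma eq_max m (p : R) B (sigma : profile R m.+1) :
  1/2 < p < 1 -> (1 <= B <= m.+1)%N -> sym_nontriv_BNE p B sigma ->
  sigma ord0 true = 1 \/ sigma ord0 false = 1.
Proof.
move=> /andP[hp1 hp2] /andP[hB1 hB2] [[hval hdev] [hs hnt]].
set a := sigma ord0 true; set b := sigma ord0 false.
have /andP[a0 a1] := hval ord0 true.
have /andP[b0 b1] := hval ord0 false.
rewrite -/a in a0 a1; rewrite -/b in b0 b1.
set rH := rr p true (sigma ord0); set rL := rr p false (sigma ord0).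
have eH : rH = p * a + (1 - p) * b by rewrite /rH rrE.
have eL : rL = (1 - p) * a + p * b by rewrite /rL rrE.
set GH := tl B.-1 (Q m rH); set GL := tl B.-1 (Q m rL).
have hsym : forall j s, sigma (lift ord0 j) s = sigma ord0 s by move=> j s; apply: hs.
have pay : forall tT tF, 0 <= tT <= 1 -> 0 <= tF <= 1 ->
    tT * (p * GH - (1 - p) * GL) + tF * ((1 - p) * GH - p * GL) <=
    a * (p * GH - (1 - p) * GL) + b * ((1 - p) * GH - p * GL).
  move=> tT tF hT hF.
  pose tau := fun s : bool => if s then tT else tF.
  have htau : forall s, 0 <= tau s <= 1 by case.
  have := hdev ord0 tau htau.
  rewrite (@payoff_sym m p B (deviate sigma ord0 tau) (sigma ord0)); last first.
    by move=> j s; rewrite /deviate /= hsym.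
  rewrite (@payoff_sym m p B sigma (sigma ord0)) //.
  rewrite /deviate eqxx !big_bool /= -/rH -/rL -/GH -/GL !rrE /= eH eL /tau.
  lra.
set al := p * GH - (1 - p) * GL; set be := (1 - p) * GH - p * GL.
have hr01 : forall x y : R, 0 <= x <= 1 -> 0 <= y <= 1 -> 0 <= p * x + (1 - p) * y <= 1.
  move=> x y /andP[x0 x1] /andP[y0 y1]; apply/andP; split; nra.
have hr02 : forall x y : R, 0 <= x <= 1 -> 0 <= y <= 1 -> 0 <= (1 - p) * x + p * y <= 1.
  move=> x y /andP[x0 x1] /andP[y0 y1]; apply/andP; split; nra.
have rH01 : 0 <= rH <= 1 by rewrite eH; apply: hr01; apply/andP.
have rL01 : 0 <= rL <= 1 by rewrite eL; apply: hr02; apply/andP.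
have i01 : 0 <= (0:R) <= 1 by apply/andP; split; lra.
have i11 : 0 <= (1:R) <= 1 by apply/andP; split; lra.
have hb' : 0 <= b <= 1 by apply/andP.
have ha' : 0 <= a <= 1 by apply/andP.
have alA : a < 1 -> al <= 0.
  move=> ha; have := pay 1 b i11 hb'; rewrite -/al -/be => h.
  have : (1 - a) * al <= 0 by lra.
  by rewrite pmulr_rle0 // subr_gt0.
have alB : 0 < a -> 0 <= al.
  move=> ha; have := pay 0 b i01 hb'; rewrite -/al -/be => h.
  have : 0 <= a * al by lra.
  by rewrite pmulr_rge0.
have beA : b < 1 -> be <= 0.
  move=> hb; have := pay a 1 ha' i11; rewrite -/al -/be => h.
  have : (1 - b) * be <= 0 by lra.
  by rewrite pmulr_rle0 // subr_gt0.
have beB : 0 < b -> 0 <= be.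
  move=> hb; have := pay a 0 ha' i01; rewrite -/al -/be => h.
  have : 0 <= b * be by lra.
  by rewrite pmulr_rge0.
have mono1 : rH <= rL -> GH <= GL.
  by move=> h; apply: tl_mono => //; [case/andP: rH01 | case/andP: rL01].
have mono2 : rL <= rH -> GL <= GH.
  by move=> h; apply: tl_mono => //; [case/andP: rL01 | case/andP: rH01].
have hBm : (B.-1 <= m)%N by rewrite -ltnS prednK.
have posL : 0 < rL -> 0 < GL.
  by move=> h; apply: tl_pos => //; rewrite h; case/andP: rL01.
have GH0 : 0 <= GH by apply: tl_ge0.
have nz : 0 < a \/ 0 < b.
  case: (ltP 0 a) => ha; first by left.
  case: (ltP 0 b) => hb; first by right.
  have a0' : a = 0 by lra.
  have b0' : b = 0 by lra.
  move: hnt; rewrite /nontrivial.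
  rewrite (@probE R m.+1 p sigma (fun w a => (B <= nplay a)%N)) big_bool.
  rewrite !(sumA B (cs_sym p _ hs)).
  have -> : rr p true (sigma ord0) = 0 by rewrite -/rH eH a0' b0'; ring.
  have -> : rr p false (sigma ord0) = 0 by rewrite -/rL eL a0' b0'; ring.
  rewrite -(prednK hB1) tl_zero /= mulr0 addr0 ltxx //.
case: (eqVneq a 1) => [->|an1]; first by left.
case: (eqVneq b 1) => [->|bn1]; first by right.
exfalso.
have ha1 : a < 1 by rewrite lt_neqAle an1.
have hb1 : b < 1 by rewrite lt_neqAle bn1.
have al0 := alA ha1; have be0 := beA hb1.
case: (ltP 0 b) => hb.
  have be1 := beB hb.
  have rLp : 0 < rL by rewrite eL; nra.
  have GLp := posL rLp.
  have : GL < GH by rewrite /be in be0 be1; nra.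
  move=> hGL.
  have hrH : rL < rH by case: (ltP rL rH) => // h; have := mono1 h; lra.
  have hab : b < a by rewrite eH eL in hrH; nra.
  have al1 := alB (le_lt_trans b0 hab).
  rewrite /al in al0 al1; nra.
have hb0 : b = 0 by lra.
case: nz => [ha|]; last lra.
have al1 := alB ha.
have rLp : 0 < rL by rewrite eL hb0; nra.
have GLp := posL rLp.
have : GH < GL by rewrite /al in al0 al1; nra.
have : rL <= rH by rewrite eH eL hb0; nra.
move=> h; have := mono2 h; lra.
Qed.

End Eq.

Unset Implicit Arguments. Set Strict Implicit.

Lemma main_w (R : realType) (p : R) (hp : 1 / 2 < p < 1)
  (B : nat -> nat)
  (hB : forall n : nat, (0 < n)%N -> (1 <= B n <= n)%N)
  (sigma : forall n : nat, profile R n)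
  (hsigma : forall n : nat, (0 < n)%N -> sym_nontriv_BNE p (B n) (sigma n))
  (w0 : bool)
  (C1 C2 : forall n : nat, bool -> {ffun 'I_n -> bool} -> {ffun 'I_n -> bool} -> bool)
  (h1 : forall n w s a, C1 n w s a = (w == w0) && [exists i : 'I_n, (val i == 0)%N && a i])
  (h2 : forall n w s a, C2 n w s a = (w == w0)) :
  (cprob p (sigma n) (@success n (B n)) (C1 n)
     - cprob p (sigma n) (@success n (B n)) (C2 n)) @[n --> \oo] --> (0 : R).
Proof.
case/andP: (hp) => hp1 hp2.
have dl0 : 0 < 1 - p by lra.
have dl1 : 1 - p < 1 by lra.
apply/cvgrPdist_le => e e0.
have [M0 hM] := pmf_small dl0 dl1 e0.
exists M0.+1 => // n /= hn.
case: n hn => [//|m] hm.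
have hS := hsigma m.+1 isT.
have [[hval _] [hs _]] := hS.
have hBm := hB m.+1 isT.
have hmax := eq_max hp hBm hS.
set r := rr p w0 (sigma m.+1 ord0).
have /andP[a0 a1] := hval ord0 true.
have /andP[b0 b1] := hval ord0 false.
have hr : 1 - p <= r /\ r <= 1.
  rewrite /r rrE; case: w0 {h1 h2 r} => /=; case: hmax => ->; split; nra.
case: hr => hr1 hr2.
have hr0 : r != 0 by rewrite gt_eqF //; lra.
case/andP: hBm => hB1 _.
rewrite (@delta_w R m p (sigma m.+1) (B m.+1) w0 (C1 m.+1) (C2 m.+1)) // -/r.
rewrite sub0r normrN ger0_norm; last first.
  apply: mulr_ge0; first lra.
  by apply: D_ge0; apply/andP; split; lra.
exact: hM.
Qed.

Theorem lemma3 (R : realType) (p : R) (hp : 1 / 2 < p < 1)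
  (B : nat -> nat) (q : R) (hq : 0 <= q <= 1)
  (hB : forall n : nat, (0 < n)%N -> (1 <= B n <= n)%N)
  (hBq : ((B n)%:R / n%:R : R) @[n --> \oo] --> q)
  (sigma : forall n : nat, profile R n)
  (hsigma : forall n : nat, (0 < n)%N -> sym_nontriv_BNE p (B n) (sigma n)) :
  (cprob p (sigma n) (@success n (B n)) (@stateH_a1 n)
     - cprob p (sigma n) (@success n (B n)) (@stateH n)) @[n --> \oo] --> (0 : R)
  /\
  (cprob p (sigma n) (@success n (B n)) (@stateL_a1 n)
     - cprob p (sigma n) (@success n (B n)) (@stateL n)) @[n --> \oo] --> (0 : R).
Proof.
split.
  apply: (@main_w R p hp B hB sigma hsigma true).
    by move=> n w s a; rewrite /stateH_a1; case: w.
  by move=> n w s a; rewrite /stateH; case: w.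
apply: (@main_w R p hp B hB sigma hsigma false).
  by move=> n w s a; rewrite /stateL_a1; case: w.
by move=> n w s a; rewrite /stateL; case: w.
Qed.
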